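(* For all integers $n$ and $\alpha$ with $n<\alpha\le 2^n$, there exists a minimal $n$-state nondeterministic finite automaton accepting a prefix-closed language whose equivalent minimal deterministic finite automaton has exactly $\alpha$ states. Moreover, if a minimal $n$-state nondeterministic finite automaton accepts a prefix-closed language whose equivalent minimal deterministic finite automaton has exactly $n$ states, then $n=1$.
   Context: NFAs have a single initial state and a transition function $\delta:Q\times\Sigma\to 2^Q$ that may map to the empty set (no sink state is needed or counted); DFAs are complete, so a sink state is counted. A minimal $n$-state NFA is an NFA with $n$ states such that no NFA with fewer states accepts the same language. A language $L\subseteq\Sigma^*$ is prefix-closed if $xy\in L$ implies $x\in L$ for all $x,y\in\Sigma^*$. *)

(* Defs.v *)
From mathcomp Require Import all_boot.
Set Implicit Arguments. Unset Strict Implicit. Unset Printing Implicit Defensive.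

Definition lang (Sigma : finType) := seq Sigma -> Prop.

Definition prefix_closed (Sigma : finType) (L : lang Sigma) : Prop :=
  forall x y : seq Sigma, L (x ++ y) -> L x.

(* NFA: single initial state, transition function Q x Sigma -> 2^Q
   (possibly empty, no sink needed). Number of states = #|nfa_state|. *)
Record nfa (Sigma : finType) := Nfa {
  nfa_state : finType;
  nfa_init : nfa_state;
  nfa_final : {set nfa_state};
  nfa_trans : nfa_state -> Sigma -> {set nfa_state} }.

Fixpoint nfa_reach (Sigma : finType) (A : nfa Sigma) (X : {set nfa_state A})
    (w : seq Sigma) : {set nfa_state A} :=
  match w with
  | [::] => X
  | a :: w' => nfa_reach (\bigcup_(q in X) nfa_trans q a) w'
  end.

Definition nfa_accept (Sigma : finType) (A : nfa Sigma) (w : seq Sigma) : bool :=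
  nfa_reach [set nfa_init A] w :&: nfa_final A != set0.

Definition nfa_accepts (Sigma : finType) (A : nfa Sigma) (L : lang Sigma) : Prop :=
  forall w, nfa_accept A w <-> L w.

(* Complete DFA (a sink state, if any, is counted). *)
Record dfa (Sigma : finType) := Dfa {
  dfa_state : finType;
  dfa_init : dfa_state;
  dfa_final : {set dfa_state};
  dfa_trans : dfa_state -> Sigma -> dfa_state }.

Definition dfa_accept (Sigma : finType) (D : dfa Sigma) (w : seq Sigma) : bool :=
  foldl (@dfa_trans Sigma D) (dfa_init D) w \in dfa_final D.

Definition dfa_accepts (Sigma : finType) (D : dfa Sigma) (L : lang Sigma) : Prop :=
  forall w, dfa_accept D w <-> L w.

Definition min_nfa_states (Sigma : finType) (L : lang Sigma) (n : nat) : Prop :=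
  (exists A : nfa Sigma, nfa_accepts A L /\ #|nfa_state A| = n) /\
  (forall B : nfa Sigma, nfa_accepts B L -> n <= #|nfa_state B|).

Definition min_dfa_states (Sigma : finType) (L : lang Sigma) (m : nat) : Prop :=
  (exists D : dfa Sigma, dfa_accepts D L /\ #|dfa_state D| = m) /\
  (forall E : dfa Sigma, dfa_accepts E L -> m <= #|dfa_state E|).

(* Main.v *)
Require Import Defs.
From mathcomp Require Import all_boot.
From Stdlib Require Classical_Prop.
Set Implicit Arguments. Unset Strict Implicit. Unset Printing Implicit Defensive.

Section Reach.
Variables (Sigma : finType) (A : nfa Sigma).

Lemma reach_cat (X : {set nfa_state A}) u v :
  nfa_reach X (u ++ v) = nfa_reach (nfa_reach X u) v.
Proof. by elim: u X => //= a u IH X. Qed.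

Lemma reach_set0 w : nfa_reach (set0 : {set nfa_state A}) w = set0.
Proof. elim: w => //= a w IH. by rewrite big_set0. Qed.

Lemma reach_mono (X Y : {set nfa_state A}) w :
  X \subset Y -> nfa_reach X w \subset nfa_reach Y w.
Proof.
elim: w X Y => //= a w IH X Y sXY; apply: IH.
apply/subsetP=> p /bigcupP [q qX pq]; apply/bigcupP; exists q => //.
exact: (subsetP sXY).
Qed.

Lemma reach_wit (X : {set nfa_state A}) w p :
  p \in nfa_reach X w -> exists2 q, q \in X & p \in nfa_reach [set q] w.
Proof.
elim: w X => [|a w IH] X /=; first by move=> pX; exists p; rewrite ?set11.
move=> /IH [r /bigcupP [q qX rq] pr]; exists q => //.
apply: (subsetP (reach_mono w _) _ pr).
by rewrite big_set1 sub1set.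
Qed.
End Reach.

Section Part2.
Variables (Sigma : finType) (D : dfa Sigma) (q0 : dfa_state D).
Definition BS := {q : dfa_state D | q != q0}.
Definition btrans (p : BS) (a : Sigma) : {set BS} :=
  if insub (dfa_trans (val p) a) is Some s then [set s] else set0.
Definition oset (o : option BS) : {set BS} := if o is Some s then [set s] else set0.
Definition ostep (o : option BS) (a : Sigma) : option BS :=
  obind (fun s : BS => insub (dfa_trans (val s) a)) o.
Definition runo (o : option BS) (w : seq Sigma) := foldl ostep o w.

Variable (init : BS).
Definition Bnfa : nfa Sigma :=
  @Nfa Sigma BS init [set p : BS | val p \in dfa_final D] btrans.

Lemma reach_runo (o : option BS) w :
  @nfa_reach Sigma Bnfa (oset o) w = oset (runo o w).
Proof.
elim: w o => //= a w IH o; rewrite -IH; f_equal.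
case: o => [s|] /=; last by rewrite big_set0.
rewrite big_set1 /= /btrans; by case: insub.
Qed.

Lemma runo_None w : runo None w = None.
Proof. by elim: w. Qed.

Lemma runo_Some w (s t : BS) :
  runo (Some s) w = Some t -> val t = foldl (@dfa_trans _ D) (val s) w.
Proof.
elim: w s => [|a w IH] s /=; first by case=> ->.
rewrite /runo /=; case: insubP => [u _ uv|_]; last by move: (runo_None w); rewrite /runo => ->.
by move=> /IH ->; rewrite uv.
Qed.

Lemma runo_NoneP w (s : BS) :
  runo (Some s) w = None -> exists u v, w = u ++ v /\
     foldl (@dfa_trans _ D) (val s) u = q0.
Proof.
elim: w s => [|a w IH] s //=.
rewrite /runo /=; case: insubP => [u _ uv|].
  move=> /IH [u1 [v [-> e]]]; exists (a :: u1), v; split => //=.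
  by rewrite -uv.
move=> /negbNE /eqP e _; by exists [:: a], w.
Qed.
End Part2.

Lemma part2 (Sigma : finType) (L : lang Sigma) (n : nat) :
  prefix_closed L -> min_nfa_states L n -> min_dfa_states L n -> n = 1.
Proof.
move=> pc [[A [AL An]] Amin] [[D [DL Dn]] _].
have n_gt0 : 0 < n by rewrite -An; apply/card_gt0P; exists (nfa_init A).
apply/eqP; rewrite eqn_leq n_gt0 andbT.
have [L0|nL0] := Classical_Prop.classic (L [::]); last first.
  pose B := @Nfa Sigma unit tt set0 (fun _ _ => set0).
  have -> : 1 = #|nfa_state B| by rewrite card_unit.
  apply: Amin => w; split; first by rewrite /nfa_accept setI0 eqxx.
  by move=> Lw; case: nL0; apply: (pc [::] w).
have [all|nall] := Classical_Prop.classic (forall w, L w).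
  pose B := @Nfa Sigma unit tt setT (fun _ _ => [set tt]).
  have -> : 1 = #|nfa_state B| by rewrite card_unit.
  apply: Amin => w; split => // _.
  have E : nfa_reach [set nfa_init B] w = [set tt].
    by elim: w => //= a w IH; rewrite -[in RHS]IH big_set1.
  by rewrite /nfa_accept E setIT; apply/set0Pn; exists tt; rewrite set11.
have [w0 nw0] : exists w0, ~ L w0.
  apply: Classical_Prop.NNPP => H; apply: nall => w.
  apply: Classical_Prop.NNPP => H'; apply: H; by exists w.
exfalso.
pose q0 := foldl (@dfa_trans _ D) (dfa_init D) w0.
have i0 : dfa_init D != q0.
  apply/eqP => e; apply: nw0; apply/DL; rewrite /dfa_accept -/q0 -e.
  by have := proj2 (DL [::]) L0.
pose B := Bnfa (Sub (dfa_init D) i0 : BS q0).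
have : n <= #|nfa_state B|.
  apply: Amin => w; split.
    rewrite /nfa_accept /= -[[set _]]/(oset (Some (Sub (dfa_init D) i0 : BS q0))).
    rewrite reach_runo; case E: runo => [t|] /=; last by rewrite set0I eqxx.
    move=> /set0Pn [x]; rewrite !inE => /andP [/eqP -> ft].
    apply/DL; rewrite /dfa_accept -(runo_Some E) //.
  move=> Lw; apply/set0Pn.
  rewrite /= -[[set _]]/(oset (Some (Sub (dfa_init D) i0 : BS q0))).
  rewrite reach_runo; case E: runo => [t|] /=.
    exists t; rewrite !inE eqxx /= (runo_Some E) /=; exact/DL.
  have [u [v [ew eu]]] := runo_NoneP E.
  have : dfa_accept D (w0 ++ v).
    rewrite /dfa_accept foldl_cat -/q0 -eu -foldl_cat -ew; exact/DL.
  by move=> /DL /pc.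
rewrite card_sig.
have -> : #|[pred x | x != q0]| = #|predC1 q0| by apply: eq_card.
by rewrite cardC1 Dn; case: (n) n_gt0 => // k; rewrite ltnn.
Qed.

Lemma extend_set (T : finType) (B U : {set T}) d :
  B \subset U -> #|B| + d <= #|U| ->
  exists R : {set T}, [/\ B \subset R, R \subset U & #|R| = #|B| + d].
Proof.
move=> sBU; elim: d => [|d IH] kle; first by exists B; rewrite addn0.
have kle' : #|B| + d <= #|U| by apply: leq_trans kle; rewrite leq_add2l.
have [R [sBR sRU cR]] := IH kle'.
have : R \proper U by rewrite properEcard sRU cR (leq_trans _ kle) // addnS.
case/properP => _ [x xU xR].
exists (x |: R); split.
- exact: subset_trans sBR (subsetUr _ _).
- by rewrite subUset sub1set xU.
- by rewrite cardsU1 xR cR addnS.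
Qed.

Section Constr.
Variable m : nat.
Local Notation N := m.+1.
Definition Sig : finType := ('I_N + {set 'I_N})%type.
Variable R : {set {set 'I_N}}.
Definition atrans (q : 'I_N) (a : Sig) : {set 'I_N} :=
  match a with
  | inl i => if q == i then [set i] else set0
  | inr Y => if (q == ord0) && (Y \in R) then Y else set0
  end.
Definition AN : nfa Sig := @Nfa Sig 'I_N ord0 setT atrans.

Lemma step_inl (X : {set 'I_N}) i :
  \bigcup_(q in X) atrans q (inl i) = if i \in X then [set i] else set0.
Proof.
apply/setP => p; apply/bigcupP/idP.
  move=> [q qX]; rewrite /atrans; case: eqP => [<-|]; last by rewrite inE.
  by rewrite qX.
case: ifP => iX; last by rewrite inE.
by move=> pi; exists i => //; rewrite /atrans eqxx.
Qed.

Lemma step_inr (X : {set 'I_N}) Y :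
  \bigcup_(q in X) atrans q (inr Y) = if (ord0 \in X) && (Y \in R) then Y else set0.
Proof.
apply/setP => p; apply/bigcupP/idP.
  move=> [q qX]; rewrite /atrans; case: eqP => [e|]; last by rewrite inE.
  by rewrite -e qX; case: (Y \in R); rewrite ?inE.
case: ifP => [/andP|]; last by rewrite inE.
by case=> oX SR pS; exists ord0 => //; rewrite /atrans eqxx SR.
Qed.

Lemma acceptA w : nfa_accept AN w = (@nfa_reach Sig AN [set ord0] w != set0).
Proof. by rewrite /nfa_accept /= setIT. Qed.

Lemma reach_word Y j : Y \in R ->
  @nfa_reach Sig AN [set ord0] [:: inr Y; inl j] = if j \in Y then [set j] else set0.
Proof. by move=> SR /=; rewrite step_inr set11 SR /= step_inl. Qed.

Lemma accept_word Y j : Y \in R ->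
  nfa_accept AN [:: inr Y; inl j] = (j \in Y).
Proof.
move=> SR; rewrite acceptA reach_word //; case: ifP => _; last by rewrite eqxx.
by apply/set0Pn; exists j; rewrite set11.
Qed.

Hypothesis R0 : set0 \in R.
Hypothesis R1 : forall i, [set i] \in R.

Lemma closedR X a : X \in R -> \bigcup_(q in X) atrans q a \in R.
Proof.
case: a => [i|Y] XR; first by rewrite step_inl; case: ifP.
by rewrite step_inr; case: ifP => // /andP [].
Qed.

Definition DS := {X : {set 'I_N} | X \in R}.
Definition Dinit : DS := Sub [set ord0] (R1 ord0).
Definition dtrans (X : DS) (a : Sig) : DS :=
  insubd X (\bigcup_(q in val X) atrans q a).
Definition DA : dfa Sig := @Dfa Sig DS Dinit [set X : DS | val X != set0] dtrans.

Lemma dfa_run (X : DS) w :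
  val (foldl (@dfa_trans _ DA) X w) = @nfa_reach Sig AN (val X) w.
Proof.
elim: w X => //= a w IH X; rewrite IH /= /dtrans val_insubd closedR //.
exact: valP.
Qed.

Lemma DA_ok w : dfa_accept DA w = nfa_accept AN w.
Proof. by rewrite /dfa_accept inE dfa_run acceptA. Qed.
End Constr.

Lemma fooling m (R : {set {set 'I_m.+1}}) (R1 : forall i, [set i] \in R)
  (B : nfa (Sig m)) :
  nfa_accepts B (fun w => nfa_accept (AN R) w) -> m.+1 <= #|nfa_state B|.
Proof.
move=> BL.
pose x (i : 'I_m.+1) : seq (Sig m) := [:: inr [set i]].
pose y (i : 'I_m.+1) : seq (Sig m) := [:: inl i].
pose P i q := (q \in nfa_reach [set nfa_init B] (x i)) &&
              (nfa_reach [set q] (y i) :&: nfa_final B != set0).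
have acc i j : nfa_accept B (x i ++ y j) = (i == j).
  apply/idP/idP.
    by move/BL; rewrite accept_word // inE eq_sym.
  by move/eqP=> <-; apply/BL; rewrite accept_word // set11.
have Pex i : exists q, P i q.
  move: (acc i i); rewrite eqxx /nfa_accept reach_cat => /set0Pn [p].
  rewrite inE => /andP [/reach_wit [q q1 q2] pf].
  exists q; rewrite /P q1 /=; apply/set0Pn; exists p; by rewrite inE q2.
pose g i := odflt (nfa_init B) [pick q | P i q].
have Pg i : P i (g i).
  rewrite /g; case: pickP => [q //|H]; have [q Hq] := Pex i; by rewrite H in Hq.
have ginj : injective g.
  move=> i j e; apply/eqP; rewrite -acc /nfa_accept reach_cat.
  have /andP [gi _] := Pg i; have /andP [_ gj] := Pg j.
  move: gj; rewrite -e => /set0Pn [p]; rewrite inE => /andP [p1 p2].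
  apply/set0Pn; exists p; rewrite inE p2 andbT.
  apply: (subsetP (reach_mono _ _) _ p1); by rewrite sub1set.
by rewrite -[m.+1]card_ord; apply: leq_card ginj.
Qed.

Lemma dfa_lower m (R : {set {set 'I_m.+1}}) (E : dfa (Sig m)) :
  dfa_accepts E (fun w => nfa_accept (AN R) w) -> #|R| <= #|dfa_state E|.
Proof.
move=> EL.
pose f (X : DS R) := foldl (@dfa_trans _ E) (dfa_init E) [:: inr (val X)].
have finj : injective f.
  move=> X Y e; apply/val_inj/setP => j.
  have H (Z : DS R) : dfa_accept E ([:: inr (val Z)] ++ [:: inl j]) = (j \in val Z).
    apply/idP/idP; first by move/EL; rewrite accept_word // (valP Z).
    by move=> jZ; apply/EL; rewrite accept_word // (valP Z).
  by rewrite -!H /dfa_accept !foldl_cat -/(f X) -/(f Y) e.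
have := @leq_card (Specif_sig__canonical__fintype_Finite (fun X => X \in R)) _ f finj; rewrite card_sig.
by have -> : #|[pred x | x \in R]| = #|R| by apply: eq_card.
Qed.

Lemma part1 (n alpha : nat) : 0 < n -> n < alpha <= 2 ^ n ->
  exists (Sigma : finType) (L : lang Sigma),
    [/\ prefix_closed L, min_nfa_states L n & min_dfa_states L alpha].
Proof.
case: n => // m _ /andP [lt1 le2].
pose B : {set {set 'I_m.+1}} := set0 |: [set [set i] | i : 'I_m.+1].
pose U : {set {set 'I_m.+1}} := powerset [set: 'I_m.+1].
have cB : #|B| = m.+2.
  rewrite cardsU1 card_imset; last exact: set1_inj.
  rewrite card_ord; case: imsetP => // [[i _ e]].
  by move: (set11 i); rewrite -e inE.
have sBU : B \subset U by apply/subsetP => X _; rewrite inE subsetT.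
have cU : #|U| = 2 ^ m.+1 by rewrite card_powerset cardsT card_ord.
have [R [sBR _ cR]] : exists R : {set {set 'I_m.+1}},
    [/\ B \subset R, R \subset U & #|R| = #|B| + (alpha - m.+2)].
  apply: extend_set => //; by rewrite cB subnKC // cU.
rewrite cB subnKC // in cR.
have R0 : set0 \in R by apply: (subsetP sBR); rewrite !inE eqxx.
have R1 i : [set i] \in R.
  apply: (subsetP sBR); rewrite !inE; apply/orP; right; apply/imsetP; by exists i.
exists (Sig m), (fun w => nfa_accept (AN R) w); split.
- move=> u v; rewrite !acceptA reach_cat; apply: contra_neq => ->.
  exact: reach_set0.
- split; last exact: fooling.
  by exists (AN R); split => //; rewrite card_ord.
- split; last by move=> E /dfa_lower; rewrite cR.
  exists (DA R1); split; first by move=> w; rewrite (DA_ok R0).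
  rewrite /= card_sig -cR; exact: eq_card.
Qed.

Theorem mainTheorem9 :
  (forall n alpha : nat, 0 < n -> n < alpha <= 2 ^ n ->
     exists (Sigma : finType) (L : lang Sigma),
       [/\ prefix_closed L, min_nfa_states L n & min_dfa_states L alpha]) /\
  (forall (Sigma : finType) (L : lang Sigma) (n : nat),
     prefix_closed L -> min_nfa_states L n -> min_dfa_states L n -> n = 1).
Proof. split; [exact: part1 | exact: part2]. Qed.
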